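(* (Compatibility.) Let $E$ be an evident branch. For every type $\sigma$, every $n\ge 0$, all terms $s,t$ of type $\sigma$, and all terms $xs_1\dots s_n$, $xt_1\dots t_n$ of type $\sigma$ with $x$ a variable: (1) it is not the case that both $s\asymp_\sigma t$ and $[s]\not\parallel[t]$; (2) either $xs_1\dots s_n\asymp_\sigma xt_1\dots t_n$ or $[s_i]\not\parallel[t_i]$ for some $i\in\{1,\dots,n\}$.
   Context: Types: a countable set of base types including a distinguished $o$; other base types are sorts ($\alpha$). Types: base types and $\sigma\tau$ (functions from $\sigma$ to $\tau$; $\sigma\tau\mu=\sigma(\tau\mu)$). Countably many names with unique types, infinitely many per type. Terms: names; $st:\mu$ for $s:\tau\mu,t:\tau$; $\lambda x.t:\sigma\tau$ for a name $x:\sigma$, $t:\tau$. $\mathrm{Wff}_\sigma$: terms of type $\sigma$. Logical constants: $\neg:oo$, $=_\sigma:\sigma\sigma o$; other names are variables. Formulas: terms of type $o$; $s=_\sigma t$ is $(=_\sigma s)t$; $s\neq_\sigma t$ is $\neg(s=_\sigma t)$. A fixed type-preserving total normalization operator $[\cdot]$ on terms, with $s$ normal iff $[s]=s$, satisfies $[[s]]=[s]$, $[[s]t]=[st]$, and $[ys_1\dots s_n]=y[s_1]\dots[s_n]$ for any name $y$, $n\ge0$, with $ys_1\dots s_n$ of base type. A branch is a set of normal formulas. $E$ is evident if ($x$ ranges over variables): (DN) $\neg\neg s\in E\Rightarrow s\in E$; (BQ) $s=_ot\in E\Rightarrow$ ($s,t\in E$ or $\neg s,\neg t\in E$); (BE)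 $s\neq_ot\in E\Rightarrow$ ($s,\neg t\in E$ or $\neg s,t\in E$); (FQ) $s=_{\sigma\tau}t\in E\Rightarrow[su]=[tu]\in E$ for all normal $u:\sigma$; (FE) $s\neq_{\sigma\tau}t\in E\Rightarrow[sx]\neq[tx]\in E$ for some variable $x$; (Mat) $xs_1\dots s_n,\neg xt_1\dots t_n\in E\Rightarrow n\ge1$ and $s_i\neq t_i\in E$ for some $i$; (Dec) $xs_1\dots s_n\neq_\alpha xt_1\dots t_n\in E\Rightarrow n\ge 1$ and $s_i\neq t_i\in E$ for some $i$; (Con) $s=_\alpha t,u\neq_\alpha v\in E\Rightarrow$ ($s\neq u,t\neq u\in E$) or ($s\neq v,t\neq v\in E$). Notation: $s\not\parallel t$ means $E$ contains $s\neq t$ or $t\neq s$. Compatibility relations $\asymp_\sigma\subseteq\mathrm{Wff}_\sigma\times\mathrm{Wff}_\sigma$ are defined by induction on types: $s\asymp_o t$ iff $\{[s],\neg[t]\}\not\subseteq E$ and $\{\neg[s],[t]\}\not\subseteq E$; for a sort $\alpha$, $s\asymp_\alpha t$ iff not $[s]\not\parallel[t]$; $s\asymp_{\sigma\tau}t$ iff $su\asymp_\tau tv$ whenever $u\asymp_\sigma v$. *)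

(* Defs.v *)
From Stdlib Require Import List Arith.
Import ListNotations.

(* Base types: Base 0 is the distinguished type o; Base (S k) are sorts. *)
Inductive ty : Type :=
| Base : nat -> ty
| Arr : ty -> ty -> ty.

Definition o : ty := Base 0.

Definition is_sort (a : ty) : Prop := exists k, a = Base (S k).

(* Names, each with a unique type; infinitely many variables per type. *)
Inductive name : Type :=
| NNeg : name
| NEq  : ty -> name
| NVar : nat -> ty -> name.

Definition name_ty (x : name) : ty :=
  match x with
  | NNeg => Arr o o
  | NEq s => Arr s (Arr s o)
  | NVar _ s => s
  end.

Definition is_var (x : name) : Prop := exists i s, x = NVar i s.

Inductive tm : Type :=
| Nm  : name -> tm
| App : tm -> tm -> tm
| Lam : name -> tm -> tm.

Inductive has_ty : tm -> ty -> Prop :=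
| ty_nm : forall x, has_ty (Nm x) (name_ty x)
| ty_app : forall s t a b, has_ty s (Arr a b) -> has_ty t a -> has_ty (App s t) b
| ty_lam : forall x t b, has_ty t b -> has_ty (Lam x t) (Arr (name_ty x) b).

Definition spine (h : tm) (ss : list tm) : tm := fold_left App ss h.

Definition tneg (s : tm) : tm := App (Nm NNeg) s.
Definition teq (a : ty) (s t : tm) : tm := App (App (Nm (NEq a)) s) t.
Definition tneq (a : ty) (s t : tm) : tm := tneg (teq a s t).

Record normalizer : Type := {
  nf :> tm -> tm;
  nf_ty : forall s a, has_ty s a -> has_ty (nf s) a;
  nf_idem : forall s a, has_ty s a -> nf (nf s) = nf s;
  nf_app : forall s t b, has_ty (App s t) b -> nf (App (nf s) t) = nf (App s t);
  nf_head : forall (y : name) (ss : list tm) (k : nat),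
      has_ty (spine (Nm y) ss) (Base k) ->
      nf (spine (Nm y) ss) = spine (Nm y) (map nf ss)
}.

Definition normal (N : normalizer) (s : tm) : Prop := N s = s.

Definition branch (N : normalizer) (E : tm -> Prop) : Prop :=
  forall s, E s -> has_ty s o /\ normal N s.

Definition evident (N : normalizer) (E : tm -> Prop) : Prop :=
  (forall s, E (tneg (tneg s)) -> E s) /\
  (forall s t, E (teq o s t) -> (E s /\ E t) \/ (E (tneg s) /\ E (tneg t))) /\
  (* BE *)
  (forall s t, E (tneq o s t) -> (E s /\ E (tneg t)) \/ (E (tneg s) /\ E t)) /\
  (forall a b s t, E (teq (Arr a b) s t) ->
     forall u, has_ty u a -> normal N u ->
       E (teq b (N (App s u)) (N (App t u)))) /\
  (* FE *)
  (forall a b s t, E (tneq (Arr a b) s t) ->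
     exists i, E (tneq b (N (App s (Nm (NVar i a)))) (N (App t (Nm (NVar i a)))))) /\
  (* Mat *)
  (forall x ss ts, is_var x -> length ss = length ts ->
     E (spine (Nm x) ss) -> E (tneg (spine (Nm x) ts)) ->
     exists i a, i < length ss /\ has_ty (nth i ss (Nm x)) a /\
       E (tneq a (nth i ss (Nm x)) (nth i ts (Nm x)))) /\
  (* Dec *)
  (forall al x ss ts, is_sort al -> is_var x -> length ss = length ts ->
     E (tneq al (spine (Nm x) ss) (spine (Nm x) ts)) ->
     exists i a, i < length ss /\ has_ty (nth i ss (Nm x)) a /\
       E (tneq a (nth i ss (Nm x)) (nth i ts (Nm x)))) /\
  (forall al s t u v, is_sort al ->
     E (teq al s t) -> E (tneq al u v) ->
     (E (tneq al s u) /\ E (tneq al t u)) \/ (E (tneq al s v) /\ E (tneq al t v))).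

Definition nparallel (E : tm -> Prop) (a : ty) (s t : tm) : Prop :=
  E (tneq a s t) \/ E (tneq a t s).

Fixpoint compat (N : normalizer) (E : tm -> Prop) (a : ty) (s t : tm) : Prop :=
  match a with
  | Base 0 => ~ (E (N s) /\ E (tneg (N t))) /\ ~ (E (tneg (N s)) /\ E (N t))
  | Base (S k) => ~ nparallel E (Base (S k)) (N s) (N t)
  | Arr a1 b1 => forall u v, has_ty u a1 -> has_ty v a1 ->
      compat N E a1 u v -> compat N E b1 (App s u) (App t v)
  end.

(* Main.v *)
Require Import Defs.
From Stdlib Require Import List Arith Lia Classical.
Import ListNotations.

Lemma has_ty_unique : forall s a, has_ty s a -> forall b, has_ty s b -> a = b.
Proof.
  induction 1; intros b' H'; inversion H'; subst; auto.
  - specialize (IHhas_ty1 _ H3). congruence.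
  - f_equal; auto.
Qed.

Lemma spine_snoc h ss u : spine h (ss ++ [u]) = App (spine h ss) u.
Proof. unfold spine; rewrite fold_left_app; reflexivity. Qed.

Lemma spine_head_ty : forall ss h a, has_ty (spine h ss) a -> exists c, has_ty h c.
Proof.
  induction ss; simpl; intros h a' H.
  - eauto.
  - destruct (IHss _ _ H) as [c Hc]. inversion Hc; subst. eauto.
Qed.

Lemma spine_arg_ty : forall ss h a i d, has_ty (spine h ss) a -> i < length ss ->
  exists b, has_ty (nth i ss d) b.
Proof.
  induction ss; simpl; intros h a' i d H Hi.
  - lia.
  - destruct i.
    + destruct (spine_head_ty _ _ _ H) as [c Hc]. inversion Hc; subst. eauto.
    + eapply IHss; eauto. lia.
Qed.

Lemma arg_ty (N : normalizer) x ss a i b : has_ty (spine (Nm x) ss) a -> i < length ss ->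
  has_ty (N (nth i ss (Nm x))) b -> has_ty (nth i ss (Nm x)) b.
Proof.
  intros H Hi Hb. destruct (spine_arg_ty ss (Nm x) a i (Nm x) H Hi) as [c Hc].
  pose proof (nf_ty N _ _ Hc) as Hc'.
  rewrite (has_ty_unique _ _ Hb _ Hc'). exact Hc.
Qed.

Lemma nth_map_lt {A B} (f:A->B) l i d d' : i < length l -> nth i (map f l) d' = f (nth i l d).
Proof. intro H. rewrite (nth_indep _ d' (f d)) by (rewrite length_map; auto). apply map_nth. Qed.

Lemma app_inv s t c : has_ty (App s t) c -> exists a, has_ty s (Arr a c) /\ has_ty t a.
Proof. intro H; inversion H; subst; eauto. Qed.

Lemma nm_inv x c : has_ty (Nm x) c -> c = name_ty x.
Proof. intro H; inversion H; subst; auto. Qed.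

Lemma tneq_inv b u v c : has_ty (tneq b u v) c -> has_ty u b /\ has_ty v b.
Proof.
  unfold tneq, tneg, teq. intro H.
  destruct (app_inv _ _ _ H) as (a1 & _ & H1).
  destruct (app_inv _ _ _ H1) as (a2 & H2 & H3).
  destruct (app_inv _ _ _ H2) as (a3 & H4 & H5).
  apply nm_inv in H4. simpl in H4. injection H4; intros; subst. auto.
Qed.

Theorem lemma6p5 (N : normalizer) (E : tm -> Prop) :
  branch N E -> evident N E ->
  forall a : ty,
    (forall s t, has_ty s a -> has_ty t a ->
       ~ (compat N E a s t /\ nparallel E a (N s) (N t))) /\
    (forall (x : name) (ss ts : list tm),
       is_var x -> length ss = length ts ->
       has_ty (spine (Nm x) ss) a -> has_ty (spine (Nm x) ts) a ->
       compat N E a (spine (Nm x) ss) (spine (Nm x) ts) \/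
       exists i b, i < length ss /\ has_ty (nth i ss (Nm x)) b /\
         nparallel E b (N (nth i ss (Nm x))) (N (nth i ts (Nm x)))).
Proof.
  intros HB HE.
  destruct HE as (HDN & HBQ & HBE & HFQ & HFE & HMat & HDec & HCon).
  assert (Wit : forall x ss ts a i b, length ss = length ts ->
            has_ty (spine (Nm x) ss) a ->
            i < length (map N ss) ->
            (E (tneq b (nth i (map N ss) (Nm x)) (nth i (map N ts) (Nm x))) \/
             E (tneq b (nth i (map N ts) (Nm x)) (nth i (map N ss) (Nm x)))) ->
            exists i b, i < length ss /\ has_ty (nth i ss (Nm x)) b /\
              nparallel E b (N (nth i ss (Nm x))) (N (nth i ts (Nm x)))).
  { intros x ss ts a i b Hl Hs Hi Hp. rewrite length_map in Hi.
    rewrite (nth_map_lt N ss i (Nm x)) in Hp by exact Hi.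
    rewrite (nth_map_lt N ts i (Nm x)) in Hp by lia.
    exists i, b. split; [exact Hi|]. split; [|exact Hp].
    apply (arg_ty N x ss a); auto.
    destruct Hp as [Hp|Hp]; apply HB in Hp; destruct Hp as [Hp _];
      apply tneq_inv in Hp; tauto. }
  intro a. induction a as [k | a1 IH1 b1 IH2].
  - destruct k as [|k].
    + split.
      * intros s t Hs Ht [Hc Hp]. simpl in Hc. destruct Hc as [H1 H2].
        destruct Hp as [Hp|Hp]; apply HBE in Hp; tauto.
      * intros x ss ts Hx Hl Hs Ht.
        destruct (classic (exists i b, i < length ss /\ has_ty (nth i ss (Nm x)) b /\
         nparallel E b (N (nth i ss (Nm x))) (N (nth i ts (Nm x))))) as [H|Hn];
          [right; exact H|left].
        simpl. rewrite (nf_head N x ss 0 Hs), (nf_head N x ts 0 Ht).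
        split; intros [H1 H2]; apply Hn.
        -- destruct (HMat x (map N ss) (map N ts) Hx ltac:(rewrite !length_map; auto) H1 H2)
             as (i & b & Hi & _ & Hp).
           eapply Wit; eauto.
        -- destruct (HMat x (map N ts) (map N ss) Hx ltac:(rewrite !length_map; auto) H2 H1)
             as (i & b & Hi & _ & Hp).
           eapply Wit; eauto. rewrite !length_map in *; lia.
    + split.
      * intros s t _ _ [Hc Hp]. exact (Hc Hp).
      * intros x ss ts Hx Hl Hs Ht.
        destruct (classic (exists i b, i < length ss /\ has_ty (nth i ss (Nm x)) b /\
         nparallel E b (N (nth i ss (Nm x))) (N (nth i ts (Nm x))))) as [H|Hn];
          [right; exact H|left].
        simpl. rewrite (nf_head N x ss (S k) Hs), (nf_head N x ts (S k) Ht).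
        assert (Hsort : is_sort (Base (S k))) by (exists k; reflexivity).
        intros [Hp|Hp]; apply Hn.
        -- destruct (HDec _ x (map N ss) (map N ts) Hsort Hx ltac:(rewrite !length_map; auto) Hp)
             as (i & b & Hi & _ & Hq).
           eapply Wit; eauto.
        -- destruct (HDec _ x (map N ts) (map N ss) Hsort Hx ltac:(rewrite !length_map; auto) Hp)
             as (i & b & Hi & _ & Hq).
           eapply Wit; eauto. rewrite !length_map in *; lia.
  - destruct IH1 as [IH1a IH1b]. destruct IH2 as [IH2a IH2b]. split.
    + intros s t Hs Ht [Hc Hp].
      assert (Hgen : forall i, has_ty (Nm (NVar i a1)) a1 /\
                 compat N E a1 (Nm (NVar i a1)) (Nm (NVar i a1))).
      { intro i. assert (Hxv : has_ty (Nm (NVar i a1)) a1) by exact (ty_nm (NVar i a1)).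
        split; [exact Hxv|].
        destruct (IH1b (NVar i a1) [] [] ltac:(exists i, a1; reflexivity) eq_refl Hxv Hxv)
          as [H|(j & _ & Hj & _)]; [exact H| simpl in Hj; lia]. }
      destruct Hp as [Hp|Hp]; destruct (HFE _ _ _ _ Hp) as [i Hi];
        destruct (Hgen i) as [Hxv Hcx];
        pose proof (Hc _ _ Hxv Hxv Hcx) as Hc';
        rewrite (nf_app N s _ b1 (ty_app _ _ _ _ Hs Hxv)),
                (nf_app N t _ b1 (ty_app _ _ _ _ Ht Hxv)) in Hi;
        apply (IH2a _ _ (ty_app _ _ _ _ Hs Hxv) (ty_app _ _ _ _ Ht Hxv));
        split; auto; [left|right]; exact Hi.
    + intros x ss ts Hx Hl Hs Ht.
      destruct (classic (exists i b, i < length ss /\ has_ty (nth i ss (Nm x)) b /\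
       nparallel E b (N (nth i ss (Nm x))) (N (nth i ts (Nm x))))) as [H|Hn];
        [right; exact H|left].
      simpl. intros u v Hu Hv Huv.
      assert (Hs' : has_ty (spine (Nm x) (ss ++ [u])) b1)
        by (rewrite spine_snoc; econstructor; eauto).
      assert (Ht' : has_ty (spine (Nm x) (ts ++ [v])) b1)
        by (rewrite spine_snoc; econstructor; eauto).
      destruct (IH2b x (ss ++ [u]) (ts ++ [v]) Hx
                 ltac:(rewrite !length_app; simpl; lia) Hs' Ht') as [H|(i&b&Hi&Hb&Hp)].
      * rewrite !spine_snoc in H. exact H.
      * exfalso. rewrite length_app in Hi; simpl in Hi.
        destruct (lt_dec i (length ss)) as [Hlt|Hge].
        -- apply Hn. exists i, b.
           rewrite !app_nth1 in Hb, Hp by lia. rewrite (app_nth1 ts) in Hp by lia. auto.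
        -- assert (i = length ss) by lia. subst i.
           rewrite !app_nth2 in Hb, Hp by lia. rewrite (app_nth2 ts) in Hp by lia. rewrite Hl, Nat.sub_diag in Hp. rewrite Nat.sub_diag in Hb. simpl in Hb, Hp.

           rewrite (has_ty_unique _ _ Hb _ Hu) in Hp.
           exact (IH1a u v Hu Hv (conj Huv Hp)).
Qed.
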